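(* Let $(R,\mathfrak{m}) \to (S,\mathfrak{n})$ be an extension of Artin local rings such that $S$ is a finite free $R$-module and the induced map of residue fields $R/\mathfrak{m} \to S/\mathfrak{n}$ is an isomorphism. If $R$ has property $\mathcal{B}$, then so does $S$.
   Context: An Artin local ring $R$ has property $\mathcal{B}$ if there exists an integer $c \geq 2$ such that $c$ divides $\ell(M)$ for every finitely generated $R$-module $M$ with bounded Betti numbers (i.e. $\sup_n \ell(\operatorname{Tor}^R_n(M,R/\mathfrak{m})) < \infty$). *)

(* Defs.v *)
From HB Require Import structures.
From mathcomp Require Import all_boot all_order all_algebra.
Set Implicit Arguments. Unset Strict Implicit. Unset Printing Implicit Defensive.
Import Order.TTheory GRing.Theory Num.Theory.
Local Open Scope ring_scope.

Definition is_submod (R : comNzRingType) (M : lmodType R) (U : M -> Prop) : Prop :=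
  U 0 /\ forall (a : R) (x y : M), U x -> U y -> U (a *: x + y).

Definition strict_chain (R : comNzRingType) (M : lmodType R)
    (n : nat) (U : nat -> M -> Prop) : Prop :=
  (forall i, (i <= n)%N -> is_submod (U i)) /\
  (forall i, (i < n)%N ->
     (forall x, U i x -> U i.+1 x) /\ exists x, U i.+1 x /\ ~ U i x).

Definition is_length (R : comNzRingType) (M : lmodType R) (n : nat) : Prop :=
  (exists U : nat -> M -> Prop, strict_chain n U) /\
  ~ (exists U : nat -> M -> Prop, strict_chain n.+1 U).

Definition fingen (R : comNzRingType) (M : lmodType R) : Prop :=
  exists (n : nat) (g : 'I_n -> M),
    forall m : M, exists a : 'I_n -> R, m = \sum_(i < n) a i *: g i.

Definition is_ideal (R : comNzRingType) (I : R -> Prop) : Prop :=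
  I 0 /\ forall a x y : R, I x -> I y -> I (a * x + y).

Definition artinian (R : comNzRingType) : Prop :=
  forall I : nat -> R -> Prop,
    (forall n, is_ideal (I n)) ->
    (forall n x, I n.+1 x -> I n x) ->
    exists N, forall n, (N <= n)%N -> forall x, I n x <-> I N x.

(* pi : R -> k is the residue map of a local ring: a surjection onto a
   field whose kernel is the set of non-units (so ker pi is the unique
   maximal ideal and k = R/m). *)
Definition residue_map (R : comNzRingType) (k : fieldType)
    (pi : {rmorphism R -> k}) : Prop :=
  (forall y : k, exists x, pi x = y) /\
  (forall x : R, pi x != 0 -> exists y, x * y = 1).

Definition artin_local (R : comNzRingType) (k : fieldType)
    (pi : {rmorphism R -> k}) : Prop :=
  residue_map pi /\ artinian R.

(* A resolution of M by finitely generated free modules (row vectors,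
   maps acting on the right):
     ... -> R^(rk 2) --dif 1--> R^(rk 1) --dif 0--> R^(rk 0) --aug--> M -> 0 *)
Record free_res (R : comNzRingType) (M : lmodType R) := FreeRes {
  rk : nat -> nat;
  dif : forall n, 'M[R]_(rk n.+1, rk n);
  aug : 'rV[R]_(rk 0) -> M;
  aug_linear : forall (a : R) (u v : 'rV[R]_(rk 0)),
      aug (a *: u + v) = a *: aug u + aug v;
  aug_surj : forall m : M, exists u, aug u = m;
  exact0 : forall u, aug u = 0 <-> exists v, u = v *m dif 0;
  exactn : forall n (u : 'rV[R]_(rk n.+1)),
      u *m dif n = 0 <-> exists v, u = v *m dif n.+1
}.

(* ell_R(Tor_n^R(M,k)) = dim_k H_n(F ⊗_R k), computed from the free
   resolution F: F_n ⊗ k = k^(rk n) with differentials reduced by pi.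
   dim H_n = (rk n - rank(out-going map)) - rank(in-coming map). *)
Definition tor_len (R : comNzRingType) (k : fieldType) (pi : {rmorphism R -> k})
    (M : lmodType R) (F : free_res M) (n : nat) : nat :=
  match n with
  | 0 => (rk F 0 - \rank (map_mx pi (dif F 0)))%N
  | n'.+1 => (rk F n'.+1 - \rank (map_mx pi (dif F n'))
              - \rank (map_mx pi (dif F n'.+1)))%N
  end.

(* M has bounded Betti numbers: sup_n ell(Tor_n(M,k)) < oo
   (Tor computed through some f.g. free resolution; independent of it). *)
Definition bounded_betti (R : comNzRingType) (k : fieldType)
    (pi : {rmorphism R -> k}) (M : lmodType R) : Prop :=
  exists (F : free_res M) (B : nat), forall n, (tor_len pi F n <= B)%N.

Definition propB (R : comNzRingType) (k : fieldType)
    (pi : {rmorphism R -> k}) : Prop :=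
  exists c : nat, (2 <= c)%N /\
    forall M : lmodType R, fingen M -> bounded_betti pi M ->
      forall n, is_length M n -> (c %| n)%N.

Definition finite_free (R S : comNzRingType) (f : {rmorphism R -> S}) : Prop :=
  exists (n : nat) (e : 'I_n -> S),
    (forall s : S, exists a : 'I_n -> R, s = \sum_(i < n) f (a i) * e i) /\
    (forall a : 'I_n -> R, \sum_(i < n) f (a i) * e i = 0 -> forall i, a i = 0).

(* Main.v *)
Require Import Defs.
From HB Require Import structures.
From mathcomp Require Import all_boot all_order all_algebra.
From Stdlib Require Import ClassicalDescription Classical IndefiniteDescription.
Set Implicit Arguments. Unset Strict Implicit. Unset Printing Implicit Defensive.
Import Order.TTheory GRing.Theory Num.Theory.
Local Open Scope ring_scope.

Definition pb (P : Prop) : bool := if excluded_middle_informative P then true else false.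
Lemma pbP (P : Prop) : reflect P (pb P).
Proof. by rewrite /pb; case: excluded_middle_informative => H; constructor. Qed.

Section Chains.
Variables (R : comNzRingType) (V : lmodType R).
Definition subp (A B : V -> Prop) := forall x, A x -> B x.

Lemma chain_mono n (U : nat -> V -> Prop) : strict_chain n U ->
  forall a b, (a <= b)%N -> (b <= n)%N -> subp (U a) (U b).
Proof.
move=> [_ hU] a b ab; elim: b ab => [|b IH].
  by rewrite leqn0 => /eqP -> _ x.
rewrite leq_eqVlt => /orP [/eqP -> _ x //| ab] bn x /IH Hx.
by apply: (proj1 (hU b bn)); apply: Hx => //; apply: ltnW.
Qed.

Lemma insert_chain n (W : nat -> V -> Prop) i (Z : V -> Prop) :
  strict_chain n W -> (i <= n.+1)%N -> is_submod Z ->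
  ((0 < i)%N -> subp (W i.-1) Z /\ exists x, Z x /\ ~ W i.-1 x) ->
  ((i <= n)%N -> subp Z (W i) /\ exists x, W i x /\ ~ Z x) ->
  strict_chain n.+1 (fun j => if (j < i)%N then W j else if j == i then Z else W j.-1).
Proof.
move=> [hs hW] iN hZ hlo hhi; split.
  move=> j jn; case: ltnP => ji; first by apply: hs; rewrite -ltnS (leq_trans ji).
  case: eqP => // /eqP jni; apply: hs; rewrite -ltnS.
  by case: j jn ji jni => //= j jn _ _.
move=> j jn.
case: (ltnP j.+1 i) => j1i.
  rewrite (ltn_trans (ltnSn j) j1i); apply: hW; rewrite -ltnS (leq_trans j1i) //.
case: (ltnP j i) => ji.
  have ei : j.+1 = i by apply/eqP; rewrite eqn_leq j1i ji.
  rewrite -ei eqxx.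
  have := hlo (leq_ltn_trans (leq0n j) ji); by rewrite -ei /=.
case: eqP => [ej|nej].
  rewrite ej (gtn_eqF (ltnSn i)) /=.
  rewrite ej in jn; by apply: hhi.
rewrite (gtn_eqF (ji : (i < j.+1)%N)) /=.
have ij : (i < j)%N by rewrite ltn_neqAle ji andbT; apply/eqP => e; apply: nej.
case: j jn ji nej ij j1i => //= j jn _ _ ij _.
by apply: hW.
Qed.

Definition NSB (X : V -> Prop) (k : nat) :=
  forall m U, strict_chain m U -> (forall i, (i <= m)%N -> subp (U i) X) -> (m <= k)%N.

Definition Rsimple (X Y : V -> Prop) :=
  forall y, Y y -> ~ X y -> forall x, Y x -> exists r : R, X (x - r *: y).

Lemma submod0 (X : V -> Prop) : is_submod X -> X 0.
Proof. by case. Qed.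

Lemma submodD (X : V -> Prop) a x y : is_submod X -> X x -> X y -> X (a *: x + y).
Proof. by case=> _ h; apply: h. Qed.

Lemma submodZ (X : V -> Prop) a x : is_submod X -> X x -> X (a *: x).
Proof. by move=> hX hx; rewrite -[_ *: _]addr0; apply: submodD => //; apply: submod0. Qed.

Lemma submodAdd (X : V -> Prop) x y : is_submod X -> X x -> X y -> X (x + y).
Proof. by move=> hX hx hy; rewrite -[x]scale1r; apply: submodD. Qed.

Lemma submodN (X : V -> Prop) x : is_submod X -> X x -> X (- x).
Proof. by move=> hX hx; rewrite -scaleN1r; apply: submodZ. Qed.

Lemma NSB0 X : (forall x, X x -> x = 0) -> NSB X 0.
Proof.
move=> h0 [|m] U [hs hU] hin //.
have [_ [x [x1 x0]]] := hU 0%N (ltn0Sn m).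
exfalso; apply: x0; rewrite (h0 x (hin 1%N (ltn0Sn m) x x1)).
by apply: submod0; apply: hs.
Qed.

Lemma submodI (X Y : V -> Prop) : is_submod X -> is_submod Y -> is_submod (fun x => X x /\ Y x).
Proof.
move=> hX hY; split; first by split; apply: submod0.
by move=> a x y [? ?] [? ?]; split; apply: submodD.
Qed.

Lemma NSB_step X Y k : is_submod X -> subp X Y -> Rsimple X Y -> NSB X k -> NSB Y k.+1.
Proof.
move=> hX XY hsim hN m U hc hin.
case: (classic (forall i, (i <= m)%N -> subp (U i) X)) => [allX | nall].
  by apply: leqW; apply: (hN m U hc allX).
case: m hc hin nall => [|m] hc hin nall; first done.
have ex : exists i, pb (~ subp (U i) X) && (i <= m.+1)%N.
  have [i hi] := not_all_ex_not _ _ nall; exists i.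
  case: (leqP i m.+1) => im; last by exfalso; apply: hi => /=; rewrite leqNgt im.
  by rewrite andbT; apply/pbP => h; apply: hi.
case: (ex_minnP ex) => t /andP[/pbP ht tm] tmin.
have below : forall j, (j < t)%N -> subp (U j) X.
  move=> j jt; apply: NNPP => nj.
  have : (t <= j)%N by apply: tmin; rewrite (ltnW (leq_trans jt tm)) andbT; apply/pbP.
  by rewrite leqNgt jt.
have notX : forall a, (t <= a)%N -> (a <= m.+1)%N -> ~ subp (U a) X.
  move=> a ta am h; apply: ht => x ux; apply: h; exact: (chain_mono hc ta am ux).
have KL : forall a, (a < m.+1)%N -> ~ subp (U a) X -> exists x, U a.+1 x /\ X x /\ ~ U a x.
  move=> a am na.
  have [y [uy ny]] : exists y, U a y /\ ~ X y.
    apply: NNPP => h; apply: na => y uy; apply: NNPP => ny; apply: h; by exists y.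
  have [_ [x0 [ux0 nx0]]] := (proj2 hc) a am.
  have hsa := (proj1 hc) a.+1 am.
  have [r hr] := hsim y (hin a (ltnW am) y uy) ny x0 (hin a.+1 am x0 ux0).
  exists (x0 - r *: y); split; last split => //.
    rewrite -scaleNr addrC; apply: submodD => //.
    exact: (chain_mono hc (leqnSn a) am).
  move=> h; apply: nx0.
  have -> : x0 = 1 *: (x0 - r *: y) + r *: y by rewrite scale1r subrK.
  apply: submodD => //; first by apply: (proj1 hc); apply: ltnW.
  by apply: submodZ => //; apply: (proj1 hc); apply: ltnW.
pose W j := fun x => (if (j < t)%N then U j x else U j.+1 x) /\ X x.
suff : (m <= k)%N by [].
apply: (hN m W); last by move=> i _ x [].
split.
  move=> j jm; apply: submodI => //; case: (j < t)%N; apply: (proj1 hc) => //.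
  exact: leqW.
move=> j jm; split.
  move=> x [hx xX]; split => //; move: hx.
  case: (ltnP j t) => jt; case: (ltnP j.+1 t) => j1t //.
  - by apply: (chain_mono hc (leqnSn j)); rewrite ltnW // ltnW.
  - by apply: (chain_mono hc (leqW (leqnSn j))).
  - by move=> h; apply: (chain_mono hc (leqnSn j.+1) jm h).
case: (ltnP j.+1 t) => j1t.
  have [_ [x [ux nx]]] := (proj2 hc) j (ltnW jm).
  exists x; rewrite /W j1t (ltn_trans (ltnSn j) j1t); split; first split => //.
    exact: (below _ j1t).
  by case.
case: (ltnP j t) => jt.
  have ej : j.+1 = t by apply/eqP; rewrite eqn_leq j1t jt.
  have tm' : (t < m.+1)%N by rewrite -ej ltnS.
  have [x [ux [xX nx]]] := KL t tm' (notX t (leqnn t) (ltnW tm')).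
  exists x; rewrite /W jt (ltnNge j.+1 t) j1t /=; split; first by split => //; rewrite ej.
  case=> h _; apply: nx; rewrite -ej; exact: (chain_mono hc (leqnSn j) (ltnW jm) h).
have [x [ux [xX nx]]] := KL j.+1 jm (notX j.+1 (leqW jt) (ltnW jm)).
exists x; rewrite /W (ltnNge j.+1 t) j1t /= (ltnNge j t) jt /=; split; first split => //.
by case.
Qed.
End Chains.

Section ResMod.
Variables (R S : comNzRingType) (f : {rmorphism R -> S}) (M : lmodType S).
Definition resM (g : {rmorphism R -> S}) : Type := M.
HB.instance Definition _ := GRing.Zmodule.on (resM f).
Definition rscale (a : R) (x : resM f) : resM f := (f a) *: (x : M).
Fact rscaleA a b v : rscale a (rscale b v) = rscale (a * b) v.
Proof. by rewrite /rscale scalerA rmorphM. Qed.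
Fact rscale1 : left_id 1 rscale.
Proof. by move=> v; rewrite /rscale rmorph1 scale1r. Qed.
Fact rscaleDr : right_distributive rscale +%R.
Proof. by move=> a u v; rewrite /rscale scalerDr. Qed.
Fact rscaleDl v : {morph rscale^~ v: a b / a + b}.
Proof. by move=> a b; rewrite /rscale rmorphD scalerDl. Qed.
HB.instance Definition _ := GRing.Zmodule_isLmodule.Build R (resM f) rscaleA rscale1 rscaleDr rscaleDl.
Lemma rscaleE (a : R) (x : resM f) : a *: x = (f a) *: (x : M).
Proof. by []. Qed.
End ResMod.

Section LengthRes.
Variables (R S : comNzRingType) (f : {rmorphism R -> S}) (M : lmodType S).
Variables (kS : fieldType) (piS : {rmorphism S -> kS}).
Hypothesis hunit : forall s : S, piS s != 0 -> exists w, s * w = 1.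
Hypothesis hlift : forall s : S, exists r : R, piS (s - f r) = 0.

Lemma submodR (P : M -> Prop) : is_submod P -> @is_submod R (resM M f) P.
Proof. by case=> h0 h; split => // a x y hx hy; rewrite rscaleE; apply: h. Qed.

Lemma chainR n (V : nat -> M -> Prop) : strict_chain n V ->
  @strict_chain R (resM M f) n V.
Proof. by case=> hs hV; split => // i hi; apply: submodR; apply: hs. Qed.

Lemma res_length n : is_length M n -> is_length (resM M f) n.
Proof.
move=> [[V hV] hmax]; split; first by exists V; apply: chainR.
have hs := proj1 hV.
have V0 : forall x, V 0%N x -> x = 0.
  move=> x vx; apply: NNPP => nx; apply: hmax.
  exists (fun j => if (j < 0)%N then V j else if j == 0%N then (fun z => z = 0) else V j.-1).
  apply: (@insert_chain S M n V 0%N (fun z : M => z = 0) hV) => //.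
  - split => // a u v -> ->; by rewrite scaler0 addr0.
  - move=> _; split; first by move=> z ->; apply: submod0; apply: hs.
    by exists x.
have Vn : forall x, V n x.
  move=> x; apply: NNPP => nx; apply: hmax.
  exists (fun j => if (j < n.+1)%N then V j else if j == n.+1 then (fun _ => True) else V j.-1).
  apply: (@insert_chain S M n V n.+1 (fun _ : M => True) hV) => //.
  - by move=> _; split => //; exists x.
  - by rewrite ltnn.
have Ssimp : forall i, (i < n)%N -> forall y, V i.+1 y -> ~ V i y ->
    forall x, V i.+1 x -> exists s : S, V i (x - s *: y).
  move=> i ii y vy ny x vx; apply: NNPP => nex; apply: hmax.
  pose Z := fun z => V i.+1 z /\ exists s : S, V i (z - s *: y).
  exists (fun j => if (j < i.+1)%N then V j else if j == i.+1 then Z else V j.-1).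
  apply: (@insert_chain S M n V i.+1 Z hV) => //.
  - exact: ltnW.
  - split.
      split; first by apply: submod0; apply: hs.
      by exists 0; rewrite scale0r subr0; apply: submod0; apply: hs; apply: ltnW.
    move=> a u v [vu [s1 h1]] [vv [s2 h2]]; split; first by apply: submodD => //; apply: hs.
    exists (a * s1 + s2).
    have -> : a *: u + v - (a * s1 + s2) *: y = a *: (u - s1 *: y) + (v - s2 *: y).
      by rewrite scalerDl -scalerA scalerBr opprD addrACA.
    by apply: submodD => //; apply: hs; apply: ltnW.
  - move=> _ /=; split.
      move=> z vz; split; first by apply: (chain_mono hV (leqnSn i) ii vz).
      by exists 0; rewrite scale0r subr0.
    exists y; split => //; split => //; exists 1; rewrite scale1r subrr.
    by apply: submod0; apply: hs; apply: ltnW.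
  - move=> _; split; first by move=> z [].
    by exists x; split => // -[].
have simp : forall i, (i < n)%N -> @Rsimple R (resM M f) (V i) (V i.+1).
  move=> i ii y vy ny x vx.
  have tV : forall t, piS t = 0 -> V i (t *: y).
    move=> t pt; apply: NNPP => nt.
    have [s' hs'] := Ssimp i ii (t *: y) (submodZ _ (hs _ ii) vy) nt y vy.
    have [w hw] : exists w, (1 - s' * t) * w = 1.
      by apply: hunit; rewrite rmorphB rmorph1 rmorphM pt mulr0 subr0 oner_neq0.
    apply: ny.
    have -> : y = w *: (y - s' *: (t *: y)).
      have e : y - s' *: (t *: y) = (1 - s' * t) *: y by rewrite scalerBl scale1r scalerA.
      by rewrite e scalerA mulrC hw scale1r.
    by apply: submodZ => //; apply: hs; apply: ltnW.
  have [s hs1] := Ssimp i ii y vy ny x vx.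
  have [r hr] := hlift s.
  exists r; rewrite rscaleE.
  have -> : (x - f r *: y : M) = (x - s *: y) + (s - f r) *: y.
    by rewrite scalerBl addrA subrK.
  apply: (@submodAdd S M) => //; first by apply: hs; apply: ltnW.
  exact: tV.
have NS : forall i, (i <= n)%N -> @NSB R (resM M f) (V i) i.
  elim=> [_|i IH ii]; first exact: NSB0.
  apply: (@NSB_step R (resM M f) (V i)).
  - by apply: submodR; apply: hs; apply: ltnW.
  - by move=> z hz; exact: (@chain_mono S M n V hV i i.+1 (leqnSn i) ii z hz).
  - exact: simp.
  - exact: IH (ltnW ii).
case=> U hU.
have := NS n (leqnn n) n.+1 U hU (fun i _ z _ => Vn z).
by rewrite ltnn.
Qed.
End LengthRes.

Lemma lin_sum (R : comNzRingType) (V : lmodType R) m (T : 'rV[R]_m -> V) :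
  (forall a u v, T (a *: u + v) = a *: T u + T v) ->
  forall u, T u = \sum_(k < m) u 0 k *: T (delta_mx 0 k).
Proof.
move=> hT u.
have T0 : T 0 = 0.
  have := hT 1 0 0; rewrite !scale1r addr0 => h.
  have : T 0 + T 0 - T 0 = T 0 - T 0 by rewrite -h.
  by rewrite addrK subrr.
rewrite {1}(row_sum_delta u).
elim/big_rec2: _ => [|k y1 y2 _ <-]; first exact: T0.
by rewrite hT.
Qed.

Lemma mylin1 (R : comNzRingType) m n (g : 'rV[R]_m -> 'rV[R]_n) :
  (forall a u v, g (a *: u + v) = a *: g u + g v) ->
  forall u, u *m lin1_mx g = g u.
Proof.
move=> hg u; rewrite [RHS](lin_sum hg); apply/rowP => i.
rewrite !mxE summxE; apply: eq_bigr => j _; by rewrite !mxE.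
Qed.

Lemma row_eq (R : comNzRingType) m n (A B : 'M[R]_(m, n)) :
  (forall u : 'rV_m, u *m A = u *m B) -> A = B.
Proof. by move=> h; apply/row_matrixP => i; rewrite !rowE h. Qed.

Section Restr.
Variables (R S : comNzRingType) (f : {rmorphism R -> S}).
Variables (N : nat) (e : 'I_N -> S).
Hypothesis hspan : forall s : S, exists a : 'I_N -> R, s = \sum_i f (a i) * e i.
Hypothesis hfree : forall a : 'I_N -> R, \sum_i f (a i) * e i = 0 -> forall i, a i = 0.

Definition coord (s : S) : 'I_N -> R := proj1_sig (constructive_indefinite_description _ (hspan s)).
Lemma coordE s : s = \sum_i f (coord s i) * e i.
Proof. exact: (proj2_sig (constructive_indefinite_description _ (hspan s))). Qed.

Lemma coord_uniq (a : 'I_N -> R) i : coord (\sum_i f (a i) * e i) i = a i.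
Proof.
set s := \sum_i _.
have h : \sum_i f (coord s i - a i) * e i = 0.
  rewrite (eq_bigr (fun i => f (coord s i) * e i - f (a i) * e i)); last first.
    by move=> j _; rewrite rmorphB mulrBl.
  by rewrite sumrB -coordE subrr.
by apply/eqP; rewrite -subr_eq0; apply/eqP; apply: hfree h i.
Qed.

Definition Phi p (u : 'rV[R]_(p * N)) : 'rV[S]_p := \row_j \sum_i f (vec_mx u j i) * e i.
Definition Psi p (w : 'rV[S]_p) : 'rV[R]_(p * N) := mxvec (\matrix_(j, i) coord (w 0 j) i).

Lemma PhiK p (w : 'rV[S]_p) : Phi (Psi w) = w.
Proof.
apply/rowP => j; rewrite /Phi /Psi mxE mxvecK [RHS]coordE.
by apply: eq_bigr => i _; rewrite mxE.
Qed.

Lemma PsiK p (u : 'rV[R]_(p * N)) : Psi (Phi u) = u.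
Proof.
rewrite /Psi -[RHS]vec_mxK; congr mxvec; apply/matrixP => j i.
by rewrite !mxE (coord_uniq (fun k => vec_mx u j k)) mxE.
Qed.

Lemma Phi_inj p : injective (@Phi p).
Proof. by move=> u v h; rewrite -(PsiK u) h PsiK. Qed.

Lemma Phi_lin p a (u v : 'rV[R]_(p * N)) : Phi (a *: u + v) = f a *: Phi u + Phi v.
Proof.
apply/rowP => j; rewrite !mxE mulr_sumr -big_split /=; apply: eq_bigr => i _.
by rewrite linearD linearZ /= !mxE rmorphD rmorphM mulrDl mulrA.
Qed.

Lemma Phi0 p : Phi (0 : 'rV[R]_(p * N)) = 0.
Proof.
apply/rowP => j; rewrite !mxE big1 // => i _.
by rewrite linear0 mxE rmorph0 mul0r.
Qed.

Lemma Psi_lin p a (w w' : 'rV[S]_p) : Psi (f a *: w + w') = a *: Psi w + Psi w'.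
Proof. by apply: Phi_inj; rewrite Phi_lin !PhiK. Qed.

Lemma Psi0 p : Psi (0 : 'rV[S]_p) = 0.
Proof. by rewrite -(Phi0 p) PsiK. Qed.

Definition Res p q (D : 'M[S]_(p, q)) : 'M[R]_(p * N, q * N) :=
  lin1_mx (fun u => Psi (Phi u *m D)).

Lemma ResE p q (D : 'M[S]_(p, q)) u : u *m Res D = Psi (Phi u *m D).
Proof.
apply: mylin1 => a x y.
by rewrite Phi_lin mulmxDl -scalemxAl Psi_lin.
Qed.

Lemma PhiRes p q (D : 'M[S]_(p, q)) u : Phi (u *m Res D) = Phi u *m D.
Proof. by rewrite ResE PhiK. Qed.

Lemma Res_mul p q r (D1 : 'M[S]_(p, q)) (D2 : 'M[S]_(q, r)) :
  Res (D1 *m D2) = Res D1 *m Res D2.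
Proof.
apply: row_eq => u; apply: Phi_inj.
by rewrite mulmxA !PhiRes mulmxA.
Qed.

Lemma Res1 p : Res (1%:M : 'M[S]_p) = 1%:M.
Proof. by apply: row_eq => u; apply: Phi_inj; rewrite PhiRes !mulmx1. Qed.


Section Rank.
Variables (kR kS : fieldType) (piR : {rmorphism R -> kR}) (piS : {rmorphism S -> kS}).
Hypothesis hunit : forall s : S, piS s != 0 -> exists w, s * w = 1.

Lemma rank_res p q (D : 'M[S]_(p, q)) :
  (N * \rank (map_mx piS D) <= \rank (map_mx piR (Res D)))%N.
Proof.
set A := map_mx piS D.
pose g := maxrankfun A.
pose A1 := rowsub g A.
have fr1 : row_free A1 := maxrowsub_free A.
have fA1 : row_full A1^T by rewrite /row_full mxrank_tr.
pose h := fullrankfun fA1.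
have uA2 : rowsub h A1^T \in unitmx := fullrowsub_unit fA1.
pose P := mxsub g h D.
have mP : map_mx piS P = (rowsub h A1^T)^T by apply/matrixP => i j; rewrite !mxE.
have dP : piS (\det P) != 0.
  by rewrite -det_map_mx mP det_tr -unitfE -unitmxE.
have [w hw] := hunit dP.
pose Q := w *: \adj P.
have PQ : P *m Q = 1%:M by rewrite /Q -scalemxAr mul_mx_adj scale_scalar_mx mulrC hw.
have eP : P = rowsub g 1%:M *m D *m colsub h 1%:M.
  by apply/matrixP => i j; rewrite -rowsubE mulmx_colsub mulmx1 !mxE.
have r1 : (\rank A * N <= \rank (map_mx piR (Res P)))%N.
  have e1 : map_mx piR (Res P) *m map_mx piR (Res Q) = 1%:M.
    by rewrite -map_mxM -Res_mul PQ Res1 map_mx1.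
  by have := mxrankM_maxl (map_mx piR (Res P)) (map_mx piR (Res Q)); rewrite e1 mxrank1.
rewrite mulnC (leq_trans r1) // eP !Res_mul !map_mxM.
by rewrite (leq_trans (mxrankM_maxl _ _)) // mxrankM_maxr.
Qed.

Section Resol.
Variables (M : lmodType S) (F : free_res M).
Definition difG n : 'M[R]_(rk F n.+1 * N, rk F n * N) := Res (dif F n).
Definition augG (u : 'rV[R]_(rk F 0 * N)) : resM M f := @aug _ _ F (Phi u).
Lemma augG_lin a u v : augG (a *: u + v) = a *: augG u + augG v.
Proof. by rewrite /augG Phi_lin aug_linear rscaleE. Qed.
Lemma augG_surj (m : resM M f) : exists u, augG u = m.
Proof. have [w hw] := aug_surj F m; exists (Psi w); by rewrite /augG PhiK. Qed.
Lemma exactG0 u : augG u = 0 <-> exists v, u = v *m difG 0.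
Proof.
rewrite /augG /difG; split.
  move/(@exact0 _ _ F) => [v hv]; exists (Psi v); apply: Phi_inj; by rewrite PhiRes PhiK.
case=> v ->; apply/(@exact0 _ _ F); exists (Phi v); by rewrite PhiRes.
Qed.
Lemma exactGn n (u : 'rV[R]_(rk F n.+1 * N)) :
  u *m difG n = 0 <-> exists v, u = v *m difG n.+1.
Proof.
rewrite /difG; split.
  move=> h; have : Phi u *m dif F n = 0 by rewrite -PhiRes h Phi0.
  move/(@exactn _ _ F) => [v hv]; exists (Psi v); apply: Phi_inj; by rewrite PhiRes PhiK.
case=> v ->; apply: Phi_inj; rewrite PhiRes PhiRes Phi0; apply/(@exactn _ _ F).
by exists (Phi v).
Qed.

Definition G : free_res (resM M f) :=
  @FreeRes R (resM M f) (fun n => (rk F n * N)%N) difG augG augG_lin augG_surj exactG0 exactGn.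

Lemma torG n : (tor_len piR G n <= N * tor_len piS F n)%N.
Proof.
case: n => [|n] /=.
  rewrite mulnBr; apply: (leq_trans (leq_sub2l (rk F 0 * N) (rank_res (dif F 0)))).
  by rewrite mulnC.
rewrite !mulnBr.
apply: (leq_trans (leq_sub (leq_sub2l (rk F n.+1 * N) (rank_res (dif F n))) (rank_res (dif F n.+1)))).
by rewrite mulnC.
Qed.
End Resol.

Lemma bb_res (M : lmodType S) : bounded_betti piS M -> bounded_betti piR (resM M f).
Proof.
case=> F [B hB]; exists (G F), (N * B)%N => n.
by rewrite (leq_trans (torG F n)) // leq_mul2l hB orbT.
Qed.
End Rank.

Lemma fingen_res (M : lmodType S) : fingen M -> fingen (resM M f).
Proof.
case=> n [g hg].
pose Th (u : 'rV[R]_(n * N)) : resM M f := \sum_(j < n) Phi u 0 j *: g j.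
have Thlin : forall a u v, Th (a *: u + v) = a *: Th u + Th v.
  move=> a u v; rewrite /Th rscaleE Phi_lin scaler_sumr -big_split; apply: eq_bigr => j _.
  by rewrite !mxE scalerDl scalerA.
exists (n * N)%N, (fun k => Th (delta_mx 0 k)).
move=> m; have [a ha] := hg m.
exists (fun k => Psi (\row_j a j) 0 k).
rewrite -(lin_sum Thlin) /Th PhiK ha; apply: eq_bigr => j _; by rewrite mxE.
Qed.

End Restr.

Theorem proposition7p2 (R S : comNzRingType) (kR kS : fieldType)
    (piR : {rmorphism R -> kR}) (piS : {rmorphism S -> kS})
    (f : {rmorphism R -> S}) :
  artin_local piR -> artin_local piS ->
  injective f -> finite_free f ->
  (exists phi : kR -> kS, bijective phi /\ forall x : R, phi (piR x) = piS (f x)) ->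
  propB piR -> propB piS.
Proof.
move=> [[sR _] _] [[_ uS] _] _ [N [e [hspan hfree]]] [phi [[phiinv c1 c2] hphi]] [c [hc2 hc]].
have hunit : forall s : S, piS s != 0 -> exists w, s * w = 1 by [].
have hlift : forall s : S, exists r : R, piS (s - f r) = 0.
  move=> s; have [r hr] := sR (phiinv (piS s)); exists r.
  by rewrite rmorphB -hphi hr c2 subrr.
exists c; split => // M fgM bbM n hlen.
apply: (hc (resM M f)).
- exact: fingen_res hspan M fgM.
- exact: (bb_res hspan hfree piR hunit bbM).
- exact: (res_length hunit hlift hlen).
Qed.
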